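(* There is a universal constant $C>0$ such that for every finite set $\mathcal{W}$ and every probability vector $\mathbf{P}=(P_w)_{w\in\mathcal{W}}$, $$\mathbb{E}_{Y\sim U(0,1)}\big(f_{1,\mathbf{P}}(Y)-1\big)^2\le C\,|\mathcal{W}|\,(1-\max_wP_w),$$ where $f_{1,\mathbf{P}}(r)=\sum_{w:P_w>0}r^{1/P_w-1}$.
   Context: $f_{1,\mathbf{P}}$ is the density on $[0,1]$ of the distribution with CDF $F_{1,\mathbf{P}}(r)=\sum_wP_wr^{1/P_w}$. *)

(* Defs.v *)
From HB Require Import structures.
From mathcomp Require Import all_boot all_order all_algebra.
From mathcomp Require Import all_classical all_reals all_analysis.
From mathcomp Require Import Rstruct Rstruct_topology.
Set Implicit Arguments. Unset Strict Implicit. Unset Printing Implicit Defensive.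
Import Order.TTheory GRing.Theory Num.Theory.
Local Open Scope ring_scope.

Definition prob_vec (R : realType) (W : finType) (P : W -> R) : Prop :=
  (forall w, 0 <= P w) /\ \sum_(w : W) P w = 1.

(* f_{1,P}(r) = sum_{w : P_w > 0} r^(1/P_w - 1), with powR (0 `^ 0 = 1). *)
Definition f1P (R : realType) (W : finType) (P : W -> R) (r : R) : R :=
  \sum_(w : W | 0 < P w) r `^ ((P w)^-1 - 1).

(* max_w P_w (the P_w are nonnegative, so 0 is a neutral start). *)
Definition maxP (R : realType) (W : finType) (P : W -> R) : R :=
  \big[Num.max/0]_(w : W) P w.

(* Main.v *)
Require Import Defs.
From HB Require Import structures.
From mathcomp Require Import all_boot all_order all_algebra.
From mathcomp Require Import all_classical all_reals all_analysis.
From mathcomp Require Import Rstruct Rstruct_topology.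
From mathcomp Require Import ring lra.
Import Order.TTheory GRing.Theory Num.Theory.
Import numFieldNormedType.Exports.
Local Open Scope classical_set_scope.
Local Open Scope ring_scope.

Section S.
Context {R : realType}.

Lemma powR_cont1 (a : R) : 0 <= a -> derivable_oo_LRcontinuous (fun x : R => x `^ a) 0 1.
Proof.
move=> a0; split.
- by move=> x; rewrite in_itv/= => /andP[x0 _]; apply: derivable_powR; rewrite in_itv/= x0.
- have [->|a0'] := eqVneq a 0.
    rewrite (_ : (fun x : R => x `^ 0) = cst 1) ?powRr0; first exact: cvg_cst.
    by apply/funext => y; rewrite powRr0.
  rewrite /= powR0//; apply: powR_cvg0; rewrite lt_neqAle eq_sym a0' a0. done.
- have h : {for 1, continuous (fun x : R => x `^ a)}.
    by apply: differentiable_continuous; rewrite -derivable1_diffP; apply: derivable_powR; rewrite in_itv/= ltr01.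
  exact: (cvg_at_left_filter h).
Qed.

Lemma int_powR (a : R) : 0 <= a ->
  (\int[lebesgue_measure]_(x in `[0%R, 1%R]) (x `^ a)%:E = ((a + 1)^-1)%:E)%E.
Proof.
move=> a0.
have a1 : 0 < a + 1 by rewrite ltr_wpDl.
rewrite (@continuous_FTC2 _ _ (fun x => x `^ (a + 1) * (a + 1)^-1))//=.
- by rewrite powR1 mul1r powR0 ?mul0r ?oppr0 ?adde0 // gt_eqF.
- exact: (derivable_oo_LRcontinuous_within (powR_cont1 _ a0)).
- have [d c0 c1] := powR_cont1 _ (ltW a1); split.
  + by move=> x x01; apply: derivableM => //; exact: d.
  + by apply: cvgM => //; exact: cvg_cst.
  + by apply: cvgM => //; exact: cvg_cst.
- move=> x; rewrite in_itv/= => /andP[x0 _].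
  rewrite derive1Mr; last by apply: derivable_powR; rewrite in_itv/= x0.
  by rewrite powR_derive1 ?in_itv/= ?x0// addrK mulrAC divff ?mul1r// gt_eqF.
Qed.

Lemma powR_le1 (x a : R) : 0 <= x <= 1 -> 0 <= a -> x `^ a <= 1.
Proof.
move=> /andP[x0 x1] a0.
have [->|xn0] := eqVneq x 0.
  by have [->|an0] := eqVneq a 0; rewrite ?powRr0 ?powR0.
have xp : 0 < x by rewrite lt_neqAle eq_sym xn0 x0.
by rewrite -(powRr0 x); apply: ger_powR => //; rewrite xp x1.
Qed.

Lemma msumT (I : finType) (Q : pred I) (h : I -> R -> R) :
  (forall i, measurable_fun setT (h i)) ->
  measurable_fun setT (fun x => \sum_(i | Q i) h i x).
Proof.
move=> mh.
rewrite (_ : (fun x => _) = fun x => \sum_(i <- index_enum I) (if Q i then h i x else 0)).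
  by apply: measurable_sum => i; case: (Q i) => //; exact: measurable_cst.
by apply/funext => x; rewrite big_mkcond.
Qed.

Lemma int_one_minus (a : R) : 0 <= a ->
  (\int[lebesgue_measure]_(x in `[0%R, 1%R]) (1 - x `^ a)%:E = (1 - (a + 1)^-1)%:E)%E.
Proof.
move=> a0.
have h := @ge0_integralD _ _ R lebesgue_measure `[0%R, 1%R] (measurable_itv _)
  (fun x => (1 - x `^ a)%:E) (fun x => (x `^ a)%:E).
rewrite int_powR // in h.
have e1 : (\int[lebesgue_measure]_(x in `[0%R, 1%R]) ((1 - x `^ a)%:E + (x `^ a)%:E) = 1)%E.
  under eq_integral do rewrite -EFinD subrK.
  rewrite integral_cst /=; last exact: measurable_itv.
  by rewrite mul1e lebesgue_measure_itv /= lte_fin ltr01 -EFinD subr0.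
rewrite e1 in h.
rewrite -[LHS](@addeK _ ((a + 1)^-1)%:E) // -h //.
- move=> x; rewrite /= in_itv /= => x01; rewrite lee_fin subr_ge0; exact: powR_le1.
- apply/measurable_realfun.measurable_EFinP; apply: measurable_realfun.measurable_funB; first exact: measurable_cst.
  exact: measurable_funTS (measurable_realfun.measurable_powR _).
- by move=> x _; rewrite lee_fin powR_ge0.
- apply/measurable_realfun.measurable_EFinP; exact: measurable_funTS (measurable_realfun.measurable_powR _).
Qed.
Lemma mainA4 (W : finType) (P : W -> R) : prob_vec P ->
  (\int[@lebesgue_measure R]_(y in `[0%R, 1%R]) (((f1P P y - 1) ^+ 2)%:E) <=
        ((4 * #|W|%:R * (1 - maxP P))%:E))%E.
Proof.
move=> [P0 P1].
have [w1 Pw1] : exists w, 0 < P w.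
  case: (pickP (fun w => 0 < P w)) => [w Pw|H]; first by exists w.
  suff : \sum_(w : W) P w = 0 by rewrite P1 => /eqP; rewrite oner_eq0.
  by apply: big1 => w _; apply/eqP; rewrite eq_le P0 andbT leNgt H.
set w0 := ([arg max_(i > w1) P i])%O.
have maxE : maxP P = P w0 by rewrite /maxP (bigmax_eq_arg _ w1).
have Pmax w : P w <= P w0 by rewrite -maxE /maxP; apply: le_bigmax.
have p0 : 0 < P w0 by apply: lt_le_trans Pw1 (Pmax w1).
have Ple1 w : P w <= 1.
  rewrite -P1 (bigD1 w) //= lerDl; exact: sumr_ge0.
set a := fun w => (P w)^-1 - 1.
have a0 w : 0 < P w -> 0 <= a w.
  by move=> Pw; rewrite /a subr_ge0 invf_ge1.
have aP w : 0 < P w -> (a w + 1)^-1 = P w.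
  by move=> Pw; rewrite /a subrK invrK.
set Q := fun w => (0 < P w) && (w != w0).
set g := fun y : R => \sum_(w | Q w) y `^ a w.
set n := #|W|%:R : R.
have n1 : 1 <= n.
  rewrite /n (_ : 1 = 1%:R) // ler_nat; apply/card_gt0P; by exists w0.
have fE y : f1P P y = y `^ a w0 + g y by rewrite /f1P (bigD1 w0).
have mg : measurable_fun setT g.
  by rewrite /g; apply: msumT => w; exact: measurable_realfun.measurable_powR.
have g0 y : 0 <= g y by apply: sumr_ge0 => w _; exact: powR_ge0.
have gn y : 0 <= y <= 1 -> g y <= n.
  move=> y01; rewrite /g /n big_mkcond /=.
  have -> : #|W|%:R = \sum_(w : W) (1 : R) by rewrite sumr_const.
  apply: ler_sum => w _; case: ifP => [/andP[Pw _]|_]; last exact: ler01.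
  by apply: powR_le1 => //; exact: a0.
have pw (y : R) : 0 <= y <= 1 ->
    (f1P P y - 1) ^+ 2 <= 2 * (1 - y `^ a w0) + (2 * n) * g y.
  move=> y01; rewrite fE.
  have t1 := powR_le1 y (a w0) y01 (a0 _ p0).
  have t0 := powR_ge0 y (a w0).
  have := gn y y01; have := g0 y.
  set t := y `^ a w0; set G := g y => G0 Gn.
  have h1 : 0 <= t * (1 - t) by apply: mulr_ge0; rewrite ?subr_ge0.
  have h2 : 0 <= G * (n - G) by apply: mulr_ge0; rewrite ?subr_ge0.
  have h3 : 0 <= (t - 1 - G) ^+ 2 by apply: sqr_ge0.
  nra.
have sQ : \sum_(w | Q w) P w = 1 - P w0.
  rewrite -P1 [X in _ = X - _](bigD1 w0) //= [P w0 + _]addrC addrK.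
  rewrite big_mkcond [RHS]big_mkcond; apply: eq_bigr => w _ /=.
  rewrite /Q; case: (w != w0); rewrite ?andbT ?andbF //.
  case: ifPn => // Pn; apply/esym/eqP; rewrite eq_le P0 andbT leNgt Pn //.
have intg : (\int[lebesgue_measure]_(y in `[0%R, 1%R]) (g y)%:E = (1 - P w0)%:E)%E.
  rewrite /g; under eq_integral => y _ do rewrite -sumEFin -big_filter.
  rewrite ge0_integral_sum //; last 2 first.
  - move=> w; apply/measurable_realfun.measurable_EFinP; exact: measurable_funTS (measurable_realfun.measurable_powR _).
  - by move=> w y _; rewrite lee_fin powR_ge0.
  rewrite big_filter -sQ -sumEFin; apply: eq_bigr => w /andP[Pw _].
  by rewrite int_powR ?aP // a0.
have e1 : (\int[lebesgue_measure]_(y in `[0%R, 1%R]) (2 * (1 - y `^ a w0))%:E = (2 * (1 - P w0))%:E)%E.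
  under eq_integral => y _ do rewrite EFinM.
  rewrite ge0_integralZl_EFin //.
  - by rewrite int_one_minus ?a0 // aP.
  - move=> y; rewrite /= in_itv /= => y01; rewrite lee_fin subr_ge0; apply: powR_le1 => //; exact: a0.
  - apply/measurable_realfun.measurable_EFinP; apply: measurable_realfun.measurable_funB; first exact: measurable_cst.
    exact: measurable_funTS (measurable_realfun.measurable_powR _).
have e2 : (\int[lebesgue_measure]_(y in `[0%R, 1%R]) (2 * n * g y)%:E = (2 * n * (1 - P w0))%:E)%E.
  under eq_integral => y _ do rewrite EFinM.
  rewrite ge0_integralZl_EFin //.
  - by rewrite intg.
  - by move=> y _; rewrite lee_fin.
  - by apply/measurable_realfun.measurable_EFinP; exact: measurable_funTS.
  - by apply: mulr_ge0 => //; apply: le_trans n1.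
apply: (@le_trans _ _ (\int[lebesgue_measure]_(y in `[0%R, 1%R])
   ((2 * (1 - y `^ a w0))%:E + ((2 * n) * g y)%:E))%E).
  apply: ge0_le_integral => //.
  - by move=> y _; rewrite lee_fin sqr_ge0.
  - apply/measurable_realfun.measurable_EFinP; apply: measurable_funTS.
    apply: measurable_realfun.measurable_funX; rewrite (_ : (fun x => _) = fun x => x `^ a w0 + g x - 1).
      apply: measurable_realfun.measurable_funB; last exact: measurable_cst.
      apply: measurable_realfun.measurable_funD => //; exact: measurable_realfun.measurable_powR.
    by apply/funext => x; rewrite fE.
  - apply: emeasurable_funD.
    + apply/measurable_realfun.measurable_EFinP; apply: measurable_funTS; apply: measurable_realfun.measurable_funM; first exact: measurable_cst.
      apply: measurable_realfun.measurable_funB; first exact: measurable_cst.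
      exact: measurable_realfun.measurable_powR.
    + apply/measurable_realfun.measurable_EFinP; apply: measurable_funTS; apply: measurable_realfun.measurable_funM => //; exact: measurable_cst.
rewrite ge0_integralD //.
- rewrite e1 e2 maxE -EFinD lee_fin.
  have := Ple1 w0; nra.
- move=> y; rewrite /= in_itv /= => y01; rewrite lee_fin; apply: mulr_ge0 => //; rewrite subr_ge0; apply: powR_le1 => //; exact: a0.
- apply/measurable_realfun.measurable_EFinP; apply: measurable_funTS; apply: measurable_realfun.measurable_funM; first exact: measurable_cst.
  apply: measurable_realfun.measurable_funB; first exact: measurable_cst.
  exact: measurable_realfun.measurable_powR.
- by move=> y _; rewrite lee_fin; apply: mulr_ge0 => //; apply: mulr_ge0 => //; apply: le_trans n1.
- apply/measurable_realfun.measurable_EFinP; apply: measurable_funTS; apply: measurable_realfun.measurable_funM => //; exact: measurable_cst.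
Qed.
End S.
Theorem lemmaA4 :
  exists C : Rdefinitions.R, 0 < C /\
    forall (W : finType) (P : W -> Rdefinitions.R),
      prob_vec P ->
      (\int[@lebesgue_measure Rdefinitions.R]_(y in `[0%R, 1%R])
          (((f1P P y - 1) ^+ 2)%:E) <=
        ((C * #|W|%:R * (1 - maxP P))%:E))%E.
Proof.
exists 4; split => // W P HP; exact: mainA4.
Qed.
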